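(* Let $(G,\mathcal{P})$ be a group pair and let $S$ be a finite generating set of $G$. Then $(G,\mathcal{P})$ is relatively finitely presented if and only if the coned-off Cayley graph $\hat\Gamma(G,\mathcal{P},S)$ is coarsely unicone simply-connected.
   Context: A group pair $(G,\mathcal{P})$: $G$ finitely generated, $\mathcal{P}$ a non-empty finite collection of subgroups (repetitions allowed); $G/\mathcal{P}=\coprod_{P\in\mathcal{P}}G/P$. For $S'\subseteq G$ let $\varphi\colon F(S')*\mathop{\ast}_{P\in\mathcal{P}}P\to G$ be induced by inclusions; $(G,\mathcal{P})$ is relatively finitely presented if there exist finite $S'$ with $\varphi$ surjective and a finite subset $R$ of the free product normally generating $\ker\varphi$. The coned-off Cayley graph $\hat\Gamma(G,\mathcal{P},S)$ has vertex set $G\sqcup G/\mathcal{P}$, edges $\{g,g'\}$ for $g^{-1}g'\in S$, and edges $\{g,A\}$ for $g\in G$, $A\in G/\mathcal{P}$ with $g\in A$. Vertices in $G/\mathcal{P}$ are cone vertices. An edge loop of length $l$ is a sequence of vertices $v_1,\dots,v_l$ with $\{v_i,v_{i+1}\}$ and $\{v_l,v_1\}$ edges; it is unicone if it contains at most one cone vertex. $\hat\Gamma_l$ is the 2-complex obtained from $\hat\Gamma(G,\mathcal{P},S)$ by attaching a 2-cell along each unicone loop of length $<l$. The graph is coarsely unicone simply-connected if $\hat\Gamma_l$ is simply-connected for some $l\in\mathbb{N}$. *)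

(* Defs.v *)
From Stdlib Require Import List Relations Arith.
Import ListNotations.

Set Implicit Arguments.

Record group := Group {
  carrier :> Type;
  gmul : carrier -> carrier -> carrier;
  gone : carrier;
  ginv : carrier -> carrier;
  gmulA : forall x y z, gmul x (gmul y z) = gmul (gmul x y) z;
  gmul1g : forall x, gmul gone x = x;
  gmulVg : forall x, gmul (ginv x) x = gone }.
Arguments gmul {g}.
Arguments gone {g}.
Arguments ginv {g}.

Section Defs.
Variable G : group.

Definition subgroup (H : G -> Prop) : Prop :=
  H gone /\ (forall x y, H x -> H y -> H (gmul x y)) /\ (forall x, H x -> H (ginv x)).

Definition gprod (l : list G) : G := fold_right gmul gone l.

Definition generates (S : list G) : Prop :=
  forall g : G, exists w : list (G * bool),
    Forall (fun a : G * bool => In (fst a) S) w /\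
    gprod (map (fun a : G * bool => if snd a then fst a else ginv (fst a)) w) = g.

Definition fin_generated : Prop := exists S : list G, generates S.

(** A group pair: G finitely generated, P a non-empty finite list (repetitions
    allowed) of subgroups; the i-th subgroup is [Pi Ps i]. *)
Definition Pi (Ps : list (G -> Prop)) (i : nat) : G -> Prop := nth i Ps (fun _ => False).

Definition group_pair (Ps : list (G -> Prop)) : Prop :=
  fin_generated /\ Ps <> [] /\ Forall subgroup Ps.

(** Letters of the free product F(S') * ( *_{i} P_i ): a generator s of S' with
    an exponent sign, or an element p of the i-th factor P_i. *)
Inductive letter := Gen (s : G) (b : bool) | Par (i : nat) (p : G).

Definition valid_letter (Ps : list (G -> Prop)) (S' : list G) (a : letter) : Prop :=
  match a with
  | Gen s _ => In s S'
  | Par i p => i < length Ps /\ Pi Ps i p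
  end.

Definition valid_word Ps S' (w : list letter) : Prop := Forall (valid_letter Ps S') w.

Definition eval_letter (a : letter) : G :=
  match a with Gen s b => if b then s else ginv s | Par _ p => p end.

Definition phi (w : list letter) : G := gprod (map eval_letter w).

(** Elementary moves: the first three generate the free product
    F(S') * ( *_i P_i ) as words modulo moves; the last inserts a relator,
    so the generated equivalence is equality modulo the normal closure of R. *)
Inductive fp_step (Ps : list (G -> Prop)) (S' : list G) (R : list (list letter))
  : list letter -> list letter -> Prop :=
| fs_free p q s b : In s S' ->
    fp_step Ps S' R (p ++ Gen s b :: Gen s (negb b) :: q) (p ++ q)
| fs_mul p q i x y : i < length Ps -> Pi Ps i x -> Pi Ps i y ->
    fp_step Ps S' R (p ++ Par i x :: Par i y :: q) (p ++ Par i (gmul x y) :: q)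
| fs_one p q i : i < length Ps ->
    fp_step Ps S' R (p ++ Par i gone :: q) (p ++ q)
| fs_rel p q r : In r R -> fp_step Ps S' R (p ++ q) (p ++ r ++ q).

Definition rel_fin_presented (Ps : list (G -> Prop)) : Prop :=
  exists (S' : list G) (R : list (list letter)),
    (forall g : G, exists w, valid_word Ps S' w /\ phi w = g) /\
    Forall (valid_word Ps S') R /\
    Forall (fun r => phi r = gone) R /\
    (forall w, valid_word Ps S' w -> phi w = gone ->
       clos_refl_sym_trans _ (fp_step Ps S' R) w []).

(** Vertices: elements of G, and cone vertices (i, A) with A a left coset of
    the i-th subgroup (A represented as a predicate on G). *)
Inductive vertex := VG (g : G) | VC (i : nat) (A : G -> Prop).

Definition is_coset (Ps : list (G -> Prop)) (i : nat) (A : G -> Prop) : Prop :=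
  i < length Ps /\ exists g : G, forall x, A x <-> Pi Ps i (gmul (ginv g) x).

Definition is_vertex Ps (v : vertex) : Prop :=
  match v with VG _ => True | VC i A => is_coset Ps i A end.

Definition is_cone (v : vertex) : Prop :=
  match v with VG _ => False | VC _ _ => True end.

Definition adj Ps (S : list G) (v w : vertex) : Prop :=
  match v, w with
  | VG g, VG g' => g <> g' /\ (In (gmul (ginv g) g') S \/ In (gmul (ginv g') g) S)
  | VG g, VC i A => is_coset Ps i A /\ A g
  | VC i A, VG g => is_coset Ps i A /\ A g
  | VC _ _, VC _ _ => False
  end.

Fixpoint walk Ps S (x : vertex) (p : list vertex) : Prop :=
  match p with
  | [] => True
  | y :: p' => adj Ps S x y /\ is_vertex Ps y /\ walk Ps S y p'
  end.

Definition edge_loop Ps S (c : list vertex) : Prop :=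
  match c with
  | [] => False
  | x :: p => is_vertex Ps x /\ walk Ps S x p /\ adj Ps S (last c x) x
  end.

Definition unicone (c : list vertex) : Prop :=
  forall v w, In v c -> In w c -> is_cone v -> is_cone w -> v = w.

(** boundaries of the 2-cells of \hat\Gamma_l *)
Definition cell_loop Ps S (l : nat) (c : list vertex) : Prop :=
  edge_loop Ps S c /\ unicone c /\ length c < l.

(** Combinatorial homotopy of edge paths in the 2-complex \hat\Gamma_l:
    insertion/deletion of a backtrack, and insertion/deletion of the
    boundary of a 2-cell (read from any of its vertices, in either direction;
    the set of cell loops is closed under rotation and reversal). *)
Inductive htp_step Ps S (l : nat) : list vertex -> list vertex -> Prop :=
| hs_back p q u v : is_vertex Ps u -> is_vertex Ps v -> adj Ps S u v ->
    htp_step Ps S l (p ++ u :: v :: u :: q) (p ++ u :: q)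
| hs_cell p q x r : cell_loop Ps S l (x :: r) ->
    htp_step Ps S l (p ++ x :: r ++ x :: q) (p ++ x :: q).

Definition homotopic Ps S l : list vertex -> list vertex -> Prop :=
  clos_refl_sym_trans _ (htp_step Ps S l).

Definition simply_connected_l Ps S (l : nat) : Prop :=
  (exists v, is_vertex Ps v) /\
  (forall v w, is_vertex Ps v -> is_vertex Ps w ->
     exists p, walk Ps S v p /\ last (v :: p) v = w) /\
  (forall x p, is_vertex Ps x -> walk Ps S x p -> last (x :: p) x = x ->
     homotopic Ps S l (x :: p) [x]).

Definition coarsely_unicone_simply_connected Ps S : Prop :=
  exists l : nat, simply_connected_l Ps S l.

End Defs.

(* Main.v *)
Require Import Defs.
From Stdlib Require Import List Relations Arith Lia.
From Stdlib Require Import Classical ClassicalEpsilon ClassicalDescription FunctionalExtensionality PropExtensionality.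
Import ListNotations.
Set Implicit Arguments.

Section Grp.
Context (G : group).
Implicit Types x y z : G.
Lemma gA x y z : gmul x (gmul y z) = gmul (gmul x y) z. Proof. apply gmulA. Qed.
Lemma g1l x : gmul gone x = x. Proof. apply gmul1g. Qed.
Lemma gVl x : gmul (ginv x) x = gone. Proof. apply gmulVg. Qed.

Lemma gmulgV x : gmul x (ginv x) = gone.
Proof.
  rewrite <- (g1l (gmul x (ginv x))).
  rewrite <- (gVl (ginv x)) at 1.
  rewrite <- gA, (gA (ginv x) x (ginv x)), gVl, g1l, gVl. reflexivity.
Qed.
Lemma gmulg1 x : gmul x gone = x.
Proof. rewrite <- (gVl x), gA, gmulgV, g1l. reflexivity. Qed.
Lemma gKV x y : gmul (ginv x) (gmul x y) = y.
Proof. rewrite gA, gVl, g1l; reflexivity. Qed.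
Lemma gVK x y : gmul x (gmul (ginv x) y) = y.
Proof. rewrite gA, gmulgV, g1l; reflexivity. Qed.
Lemma gcancel x y z : gmul x y = gmul x z -> y = z.
Proof. intro H. rewrite <- (gKV x y), H, gKV. reflexivity. Qed.
Lemma ginvK x : ginv (ginv x) = x.
Proof. apply (gcancel (ginv x)). rewrite gmulgV, gVl. reflexivity. Qed.
Lemma ginvM x y : ginv (gmul x y) = gmul (ginv y) (ginv x).
Proof. apply (gcancel (gmul x y)). rewrite gmulgV, <- gA, (gA y), gmulgV, g1l, gmulgV. reflexivity. Qed.
Lemma ginv1 : ginv (@gone G) = gone.
Proof. rewrite <- (gmulg1 (ginv gone)), gVl. reflexivity. Qed.
Lemma ginv_inj x y : ginv x = ginv y -> x = y.
Proof. intro H. rewrite <- (ginvK x), H, ginvK. reflexivity. Qed.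
Lemma gmul_eq1 x y : gmul x y = gone -> y = ginv x.
Proof. intro H. apply (gcancel x). rewrite H, gmulgV. reflexivity. Qed.

Lemma sub1 (H : G -> Prop) : subgroup G H -> H gone.
Proof. intros [a _]; exact a. Qed.
Lemma subM (H : G -> Prop) x y : subgroup G H -> H x -> H y -> H (gmul x y).
Proof. intros [_ [a _]]; auto. Qed.
Lemma subV (H : G -> Prop) x : subgroup G H -> H x -> H (ginv x).
Proof. intros [_ [_ a]]; auto. Qed.
Arguments subM [H x y]. Arguments subV [H x].
Lemma sub_coset (H : G -> Prop) g x y : subgroup G H -> H (gmul (ginv g) x) -> H (gmul (ginv g) y) ->
  H (gmul (ginv x) y).
Proof.
  intros sH a b. pose proof (subM sH (subV sH a) b) as c.
  rewrite ginvM, ginvK, <- gA, gVK in c. exact c.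
Qed.

Lemma gprod_app (u v : list G) : gprod G (u ++ v) = gmul (gprod G u) (gprod G v).
Proof. induction u; simpl. now rewrite g1l. now rewrite IHu, gA. Qed.

Definition dec (P : Prop) : {P} + {~ P} := excluded_middle_informative P.

Lemma phi_app (u v : list (letter G)) : phi (u ++ v) = gmul (phi u) (phi v).
Proof. unfold phi. now rewrite map_app, gprod_app. Qed.
Lemma phi_cons a (v : list (letter G)) : phi (a :: v) = gmul (eval_letter a) (phi v).
Proof. reflexivity. Qed.

Lemma Pi_sub (Ps : list (G -> Prop)) i : Forall (@subgroup G) Ps -> i < length Ps -> subgroup G (Pi G Ps i).
Proof.
  intros F Hi. rewrite Forall_forall in F. apply F. unfold Pi. apply nth_In. exact Hi.
Qed.

Lemma split_last (x : vertex G) (X : list (vertex G)) :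
  exists A, x :: X = A ++ [last (x :: X) x].
Proof.
  exists (removelast (x :: X)). apply app_removelast_last. discriminate.
Qed.

Lemma last_indep (v : vertex G) L d d' : last (v :: L) d = last (v :: L) d'.
Proof. revert v. induction L; intros; simpl; auto. destruct L; auto. apply (IHL a). Qed.

Lemma last_cons_ne (a : vertex G) L d : L <> [] -> last (a :: L) d = last L d.
Proof. destruct L. congruence. reflexivity. Qed.

Lemma last_app_cons (A : list (vertex G)) (v : vertex G) B d : last (A ++ v :: B) d = last (v :: B) v.
Proof.
  induction A as [|a A IH]. { apply last_indep. }
  rewrite <- app_comm_cons, last_cons_ne. apply IH. destruct A; discriminate.
Qed.

Lemma last_cons_cons (v w : vertex G) L d : last (v :: w :: L) d = last (w :: L) w.
Proof. rewrite last_cons_ne by discriminate. apply last_indep. Qed.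

End Grp.
Arguments subM [G H x y]. Arguments subV [G H x]. Arguments sub_coset [G H] g [x y].


Ltac nrm K := repeat rewrite <- app_assoc in K; repeat rewrite <- app_assoc; simpl in K |- *;
  repeat rewrite <- app_assoc in K; repeat rewrite <- app_assoc; simpl in K |- *.

Section Common.
Context (G : group) (Ps : list (G -> Prop)) (S : list G).

Lemma adj_sym u v : adj Ps S u v -> adj Ps S v u.
Proof. destruct u, v; simpl; intuition. Qed.
Lemma adj_vx u v : adj Ps S u v -> is_vertex Ps u /\ is_vertex Ps v.
Proof. destruct u, v; simpl; intuition. Qed.

Lemma walk_app x p q : walk Ps S x (p ++ q) <-> walk Ps S x p /\ walk Ps S (last (x :: p) x) q.
Proof.
  revert x. induction p as [|y p IH]; intro x.
  - simpl. tauto.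
  - cbn [walk app]. rewrite IH, last_cons_cons. tauto.
Qed.

Lemma walk_snoc x p y : walk Ps S x (p ++ [y]) <-> walk Ps S x p /\ adj Ps S (last (x :: p) x) y.
Proof.
  rewrite walk_app. simpl. split.
  - intros [a [b [c _]]]; auto.
  - intros [a b]; repeat split; auto. apply (adj_vx _ _ b).
Qed.

Lemma ht_ctx l u v A B : homotopic Ps S l u v -> homotopic Ps S l (A ++ u ++ B) (A ++ v ++ B).
Proof.
  intro H. induction H.
  - apply rst_step. destruct H.
    + pose proof (@hs_back G Ps S l (A ++ p) (q ++ B) u v H H0 H1) as K.
      nrm K. exact K.
    + pose proof (@hs_cell G Ps S l (A ++ p) (q ++ B) x r H) as K.
      nrm K. exact K.
  - apply rst_refl.
  - apply rst_sym; auto.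
  - eapply rst_trans; eauto.
Qed.

Lemma ht_ctx' l u v A B : homotopic Ps S l u v -> homotopic Ps S l (A ++ u ++ B) (A ++ v ++ B).
Proof. apply ht_ctx. Qed.

End Common.

Section FP.
Context (G : group) (Ps : list (G -> Prop)) (S' : list G) (R : list (list (letter G))).
Definition FE := clos_refl_sym_trans _ (fp_step Ps S' R).

Lemma fe_ctx u v A B : FE u v -> FE (A ++ u ++ B) (A ++ v ++ B).
Proof.
  intro H. induction H.
  - apply rst_step. destruct H.
    + pose proof (@fs_free G Ps S' R (A ++ p) (q ++ B) s b H) as K.
      nrm K. exact K.
    + pose proof (@fs_mul G Ps S' R (A ++ p) (q ++ B) i x y H H0 H1) as K.
      nrm K. exact K.
    + pose proof (@fs_one G Ps S' R (A ++ p) (q ++ B) i H) as K.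
      nrm K. exact K.
    + pose proof (@fs_rel G Ps S' R (A ++ p) (q ++ B) r H) as K.
      nrm K. exact K.
  - apply rst_refl.
  - apply rst_sym; auto.
  - eapply rst_trans; eauto.
Qed.

Lemma fe_trans u v w : FE u v -> FE v w -> FE u w.
Proof. apply rst_trans. Qed.
Lemma fe_sym u v : FE u v -> FE v u.
Proof. apply rst_sym. Qed.

Lemma fe_l u v A : FE u v -> FE (A ++ u) (A ++ v).
Proof. intro H. pose proof (fe_ctx A [] H) as K. rewrite !app_nil_r in K. exact K. Qed.
Lemma fe_r u v B : FE u v -> FE (u ++ B) (v ++ B).
Proof. intro H. exact (fe_ctx [] B H). Qed.
Lemma fe_app u v u' v' : FE u v -> FE u' v' -> FE (u ++ u') (v ++ v').
Proof. intros. eapply fe_trans. apply fe_r; eauto. apply fe_l; auto. Qed.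

Definition flip (a : letter G) : letter G :=
  match a with Gen _ s b => Gen G s (negb b) | Par _ i p => Par G i (ginv p) end.
Definition winv (w : list (letter G)) := rev (map flip w).

Lemma eval_flip a : eval_letter (flip a) = ginv (eval_letter a).
Proof. destruct a as [s b|i p]; simpl; auto. destruct b; simpl; auto. now rewrite ginvK. Qed.

Lemma phi_winv w : phi (winv w) = ginv (phi w).
Proof.
  induction w as [|a w IH]. simpl. unfold phi. simpl. now rewrite ginv1.
  unfold winv. simpl. rewrite phi_app. fold (winv w). rewrite IH, (phi_cons a w), ginvM.
  unfold phi at 2. simpl. rewrite gmulg1, eval_flip. reflexivity.
Qed.

Definition vletter (a : letter G) := valid_letter Ps S' a.

Lemma fe_flip_l a : Forall (@subgroup G) Ps -> vletter a -> FE [flip a; a] [].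
Proof.
  intros sP Ha. destruct a as [s b|i p]; simpl in *.
  - apply rst_step. pose proof (@fs_free G Ps S' R [] [] s (negb b) Ha) as K. simpl in K.
    rewrite Bool.negb_involutive in K. exact K.
  - destruct Ha as [Hi Hp]. pose proof (Pi_sub sP Hi) as sH.
    eapply rst_trans. apply rst_step. exact (@fs_mul G Ps S' R [] [] i _ _ Hi (subV sH Hp) Hp).
    simpl. rewrite gVl. apply rst_step. exact (@fs_one G Ps S' R [] [] i Hi).
Qed.

Lemma fe_flip_r a : Forall (@subgroup G) Ps -> vletter a -> FE [a; flip a] [].
Proof.
  intros sP Ha. destruct a as [s b|i p]; simpl in *.
  - apply rst_step. exact (@fs_free G Ps S' R [] [] s b Ha).
  - destruct Ha as [Hi Hp]. pose proof (Pi_sub sP Hi) as sH.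
    eapply rst_trans. apply rst_step. exact (@fs_mul G Ps S' R [] [] i _ _ Hi Hp (subV sH Hp)).
    simpl. rewrite gmulgV. apply rst_step. exact (@fs_one G Ps S' R [] [] i Hi).
Qed.

Lemma fe_winv_l w : Forall (@subgroup G) Ps -> Forall vletter w -> FE (winv w ++ w) [].
Proof.
  intros sP Hw. induction Hw as [|a w Ha Hw IH]. apply rst_refl.
  unfold winv. simpl. fold (winv w). rewrite <- app_assoc.
  eapply fe_trans. apply fe_l. apply (fe_ctx [] w (fe_flip_l _ sP Ha)).
  simpl. exact IH.
Qed.

Lemma fe_winv_r w : Forall (@subgroup G) Ps -> Forall vletter w -> FE (w ++ winv w) [].
Proof.
  intros sP Hw. induction Hw as [|a w Ha Hw IH]. apply rst_refl.
  assert (E: (a :: w) ++ winv (a :: w) = [a] ++ (w ++ winv w) ++ [flip a])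
    by (unfold winv; simpl; rewrite <- !app_assoc; reflexivity).
  rewrite E.
  eapply fe_trans. apply fe_ctx. exact IH. simpl. apply fe_flip_r; auto.
Qed.

Lemma fe_cyc U V : Forall (@subgroup G) Ps -> Forall vletter V -> FE (U ++ V) [] -> FE (V ++ U) [].
Proof.
  intros sP HV H.
  pose proof (fe_sym (fe_l (V ++ U) (fe_winv_r sP HV))) as K. rewrite app_nil_r in K.
  eapply fe_trans. exact K.
  replace ((V ++ U) ++ V ++ winv V) with (V ++ (U ++ V) ++ winv V) by (rewrite <- !app_assoc; reflexivity).
  eapply fe_trans. apply (fe_ctx V (winv V) H). simpl. apply fe_winv_r; auto.
Qed.

End FP.

Section Back.
Context (G : group) (Ps : list (G -> Prop)) (Sg : list G) (l : nat).
Context (sP : Forall (subgroup G) Ps).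

Definition rep (A : G -> Prop) : G := epsilon (inhabits (@gone G)) A.
Lemma rep_spec (A : G -> Prop) : (exists x, A x) -> A (rep A).
Proof. intro H. exact (epsilon_spec (inhabits gone) A H). Qed.



Lemma coset_sub {i A} : is_coset G Ps i A -> subgroup G (Pi G Ps i).
Proof. intros [Hi _]. exact (Pi_sub sP Hi). Qed.

Lemma coset_rep {i A} : is_coset G Ps i A -> A (rep A).
Proof.
  intro Hc. pose proof (coset_sub Hc) as sH. destruct Hc as [Hi [g Hg]].
  apply rep_spec. exists g. apply Hg. rewrite gVl. exact (sub1 sH).
Qed.

Lemma coset_mem {i A a b} : is_coset G Ps i A -> A a -> A b -> Pi G Ps i (gmul (ginv a) b).
Proof.
  intros Hc Ha Hb. pose proof (coset_sub Hc) as sH. destruct Hc as [Hi [g Hg]].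
  apply (sub_coset g sH); apply Hg; auto.
Qed.

Definition Sl (a : letter G) : Prop := exists s b, a = Gen G s b /\ In s Sg.
Definition Sw w := Forall Sl w.

Definition alph := map (fun s => Gen G s true) Sg ++ map (fun s => Gen G s false) Sg.
Fixpoint words (n : nat) : list (list (letter G)) :=
  match n with 0 => [[]] | Datatypes.S n' => [] :: flat_map (fun a => map (cons a) (words n')) alph end.

Lemma alph_in a : Sl a -> In a alph.
Proof.
  intros [s [b [-> H]]]. unfold alph. apply in_or_app. destruct b; [left|right];
  apply in_map_iff; eauto.
Qed.
Lemma in_alph a : In a alph -> Sl a.
Proof.
  unfold alph. intro H. apply in_app_or in H. destruct H as [H|H]; apply in_map_iff in H;
  destruct H as [s [<- Hs]]; eexists; eexists; eauto.
Qed.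

Lemma words_in n w : Sw w -> length w <= n -> In w (words n).
Proof.
  revert w. induction n as [|n IH]; intros w Hw Hl.
  - destruct w; simpl in *. auto. lia.
  - destruct w as [|a w]. simpl; auto. simpl. right. apply in_flat_map. inversion Hw; subst.
    exists a. split. apply alph_in; auto. apply in_map. apply IH; auto. simpl in Hl; lia.
Qed.
Lemma in_words n w : In w (words n) -> Sw w /\ length w <= n.
Proof.
  revert w. induction n as [|n IH]; intros w H; simpl in H.
  - destruct H as [<-|[]]. split. constructor. simpl; lia.
  - destruct H as [<-|H]. split. constructor. simpl; lia.
    apply in_flat_map in H. destruct H as [a [Ha H]]. apply in_map_iff in H.
    destruct H as [w' [<- H]]. apply IH in H. destruct H. split. constructor; auto. apply in_alph; auto.
    simpl; lia.
Qed.

Definition bdec (P : Prop) : bool := if dec P then true else false.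

Definition Rset : list (list (letter G)) :=
  filter (fun w => bdec (phi w = gone)) (words (l + 2)) ++
  flat_map (fun w => flat_map (fun i => if dec (Pi G Ps i (phi w)) then [w ++ [Par G i (ginv (phi w))]] else [])
                      (seq 0 (length Ps))) (words l).

Lemma R1 w : Sw w -> length w <= l + 2 -> phi w = gone -> In w Rset.
Proof.
  intros. unfold Rset. apply in_or_app. left. apply filter_In. split. apply words_in; auto.
  unfold bdec. destruct (dec _); auto.
Qed.

Lemma R2 w i : Sw w -> length w <= l -> i < length Ps -> Pi G Ps i (phi w) ->
  In (w ++ [Par G i (ginv (phi w))]) Rset.
Proof.
  intros. unfold Rset. apply in_or_app. right. apply in_flat_map. exists w. split. apply words_in; auto.
  apply in_flat_map. exists i. split. apply in_seq. lia. destruct (dec _). left; auto. contradiction.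
Qed.

Lemma Sl_valid a : Sl a -> valid_letter Ps Sg a.
Proof. intros [s [b [-> H]]]. exact H. Qed.
Lemma Sw_valid w : Sw w -> valid_word Ps Sg w.
Proof. intro H. eapply Forall_impl; [|exact H]. apply Sl_valid. Qed.

Lemma Rset_prop : Forall (valid_word Ps Sg) Rset /\ Forall (fun r => phi r = gone) Rset.
Proof.
  split; apply Forall_forall; intros r Hr; unfold Rset in Hr; apply in_app_or in Hr;
  destruct Hr as [Hr|Hr].
  - apply filter_In in Hr. destruct Hr as [Hr _]. apply in_words in Hr. apply Sw_valid; tauto.
  - apply in_flat_map in Hr. destruct Hr as [w [Hw Hr]]. apply in_flat_map in Hr.
    destruct Hr as [i [Hi Hr]]. destruct (dec _) as [Hp|]; [|destruct Hr].
    destruct Hr as [<-|[]]. apply in_words in Hw. apply in_seq in Hi.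
    unfold valid_word. apply Forall_app. split. apply Sw_valid; tauto.
    constructor; [|constructor]. simpl. split. lia. apply (subV (Pi_sub sP (proj2 Hi))). exact Hp.
  - apply filter_In in Hr. destruct Hr as [_ Hr]. unfold bdec in Hr. destruct (dec _); congruence.
  - apply in_flat_map in Hr. destruct Hr as [w [Hw Hr]]. apply in_flat_map in Hr.
    destruct Hr as [i [Hi Hr]]. destruct (dec _) as [Hp|]; [|destruct Hr].
    destruct Hr as [<-|[]]. rewrite phi_app. unfold phi at 2. simpl. rewrite gmulg1, gmulgV. reflexivity.
Qed.

Notation FE' := (FE Ps Sg Rset).

Lemma fe_rel r : In r Rset -> FE' r [].
Proof.
  intro H. apply rst_sym, rst_step. pose proof (@fs_rel G Ps Sg Rset [] [] r H) as K.
  simpl in K. rewrite app_nil_r in K. exact K.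
Qed.

Lemma Sw_winv w : Sw w -> Sw (winv w).
Proof.
  intro H. unfold winv. apply Forall_rev. apply Forall_map. eapply Forall_impl; [|exact H].
  intros a [s [b [-> Hs]]]. simpl. exists s, (negb b). auto.
Qed.

Lemma Sw_vl w : Sw w -> Forall (vletter Ps Sg) w.
Proof. intro H. eapply Forall_impl; [|exact H]. intros a Ha. apply Sl_valid; auto. Qed.

Lemma sw_eq u u' : Sw u -> Sw u' -> length u + length u' <= l + 2 -> phi u = phi u' -> FE' u u'.
Proof.
  intros Hu Hu' Hl Hp.
  pose proof (fe_sym (fe_l u (fe_winv_l Rset sP (Sw_vl Hu')))) as K. rewrite app_nil_r in K.
  eapply fe_trans. exact K. rewrite app_assoc.
  eapply fe_trans. apply fe_r. apply fe_rel. apply R1.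
  - apply Forall_app; split; auto. apply Sw_winv; auto.
  - rewrite length_app. unfold winv. rewrite length_rev, length_map. lia.
  - rewrite phi_app, phi_winv, Hp, gmulgV. reflexivity.
  - apply rst_refl.
Qed.

Lemma parmerge i x y : i < length Ps -> Pi G Ps i x -> Pi G Ps i y ->
  FE' [Par G i x; Par G i y] [Par G i (gmul x y)].
Proof. intros. apply rst_step. exact (@fs_mul G Ps Sg Rset [] [] i x y H H0 H1). Qed.

Lemma parone i : i < length Ps -> FE' [Par G i gone] [].
Proof. intros. apply rst_step. exact (@fs_one G Ps Sg Rset [] [] i H). Qed.

Definition edgew (u v : vertex G) : list (letter G) :=
  match u, v with
  | VG _ a, VG _ b => if dec (In (gmul (ginv a) b) Sg) then [Gen G (gmul (ginv a) b) true]
                      else [Gen G (gmul (ginv b) a) false]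
  | VG _ a, VC _ i A => [Par G i (gmul (ginv a) (rep A))]
  | VC _ i A, VG _ b => [Par G i (gmul (ginv (rep A)) b)]
  | _, _ => []
  end.

Fixpoint wd (L : list (vertex G)) : list (letter G) :=
  match L with
  | x :: ((y :: _) as L') => edgew x y ++ wd L'
  | _ => []
  end.

Lemma wd_app A x B : wd (A ++ x :: B) = wd (A ++ [x]) ++ wd (x :: B).
Proof.
  induction A as [|a A IH]. reflexivity.
  destruct A as [|a' A].
  - simpl. rewrite app_nil_r. reflexivity.
  - change (wd (a :: (a' :: A) ++ x :: B) = wd (a :: (a' :: A) ++ [x]) ++ wd (x :: B)).
    simpl. simpl in IH. rewrite IH. rewrite app_assoc. reflexivity.
Qed.

Lemma edge_vg a b : adj Ps Sg (VG G a) (VG G b) ->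
  Sw (edgew (VG G a) (VG G b)) /\ length (edgew (VG G a) (VG G b)) = 1 /\
  phi (edgew (VG G a) (VG G b)) = gmul (ginv a) b.
Proof.
  simpl. intros [Hne Hin]. destruct (dec _) as [H|H].
  - split. constructor; [|constructor]. eexists; eexists; eauto. split; auto.
    unfold phi; simpl. now rewrite gmulg1.
  - split. constructor; [|constructor]. eexists; eexists; split; eauto. tauto. split; auto.
    unfold phi; simpl. rewrite gmulg1, ginvM, ginvK. reflexivity.
Qed.

Lemma edge_valid u v : adj Ps Sg u v -> Forall (vletter Ps Sg) (edgew u v).
Proof.
  intro H. destruct u as [a|i A], v as [b|j B].
  - apply Sw_vl. apply (edge_vg H).
  - simpl in H. destruct H as [Hc Hb]. constructor; [|constructor]. simpl. split. apply Hc.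
    apply (coset_mem Hc); auto. apply (coset_rep Hc).
  - simpl in H. destruct H as [Hc Hb]. constructor; [|constructor]. simpl. split. apply Hc.
    apply (coset_mem Hc); auto. apply (coset_rep Hc).
  - destruct H.
Qed.

Lemma wd_valid x L : walk Ps Sg x L -> Forall (vletter Ps Sg) (wd (x :: L)).
Proof.
  revert x. induction L as [|y L IH]; intros x H. constructor.
  simpl in H. destruct H as [Ha [_ Hw]]. change (Forall (vletter Ps Sg) (edgew x y ++ wd (y :: L))).
  apply Forall_app. split. apply edge_valid; auto. apply IH; auto.
Qed.

Lemma back_fe u v : adj Ps Sg u v -> FE' (edgew u v ++ edgew v u) [].
Proof.
  intro H. destruct u as [a|i A], v as [b|j B].
  - destruct (edge_vg H) as [H1 [H2 H3]]. destruct (edge_vg (adj_sym _ _ _ _ H)) as [H4 [H5 H6]].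
    apply sw_eq. apply Forall_app; split; auto. constructor. rewrite length_app, H2, H5; simpl; lia.
    rewrite phi_app, H3, H6. unfold phi. simpl. rewrite <- gA, gVK, gVl. reflexivity.
  - simpl in H. destruct H as [Hc Hb]. simpl. pose proof (coset_rep Hc).
    eapply fe_trans. apply parmerge. apply Hc. apply (coset_mem Hc); auto. apply (coset_mem Hc); auto.
    rewrite <- gA, gVK, gVl. apply parone. apply Hc.
  - simpl in H. destruct H as [Hc Hb]. simpl. pose proof (coset_rep Hc).
    eapply fe_trans. apply parmerge. apply Hc. apply (coset_mem Hc); auto. apply (coset_mem Hc); auto.
    rewrite <- gA, gVK, gVl. apply parone. apply Hc.
  - destruct H.
Qed.

Definition noncone (v : vertex G) := ~ is_cone v.

Lemma vg_walk L : forall a, Forall noncone L -> walk Ps Sg (VG G a) L ->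
  Sw (wd (VG G a :: L)) /\ length (wd (VG G a :: L)) = length L /\
  (forall b, last (VG G a :: L) (VG G a) = VG G b -> phi (wd (VG G a :: L)) = gmul (ginv a) b).
Proof.
  induction L as [|v L IH]; intros a Hn Hw.
  - simpl. split. constructor. split; auto. intros b Hb. injection Hb as ->. rewrite gVl. reflexivity.
  - inversion Hn as [|? ? Hv Hn']; subst. destruct v as [b|i A]. 2:{ destruct Hv; exact I. }
    simpl in Hw. destruct Hw as [Ha [_ Hw]].
    destruct (IH b Hn' Hw) as [K1 [K2 K3]]. destruct (edge_vg Ha) as [E1 [E2 E3]].
    change (wd (VG G a :: VG G b :: L)) with (edgew (VG G a) (VG G b) ++ wd (VG G b :: L)).
    split. apply Forall_app; split; auto. split. rewrite length_app, E2, K2. reflexivity.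
    intros c Hc. rewrite last_cons_cons in Hc. rewrite phi_app, E3, (K3 c Hc), <- gA, gVK. reflexivity.
Qed.

Lemma unicone_sub {c c' : list (vertex G)} : (forall w, In w c' -> In w c) -> unicone c -> unicone c'.
Proof. intros H U u w Hu Hw. apply U; auto. Qed.

Lemma edge_loop_iff x r : edge_loop Ps Sg (x :: r) <-> is_vertex Ps x /\ walk Ps Sg x (r ++ [x]).
Proof. simpl. rewrite walk_snoc. tauto. Qed.

Lemma rotate_cell x a v b : cell_loop Ps Sg l (x :: a ++ v :: b) -> cell_loop Ps Sg l (v :: b ++ x :: a).
Proof.
  intros [He [Hu Hl]]. apply edge_loop_iff in He. destruct He as [Hx Hw].
  replace ((a ++ v :: b) ++ [x]) with ((a ++ [v]) ++ (b ++ [x])) in Hw by (rewrite <- !app_assoc; reflexivity).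
  apply walk_app in Hw. destruct Hw as [W1 W2]. rewrite app_comm_cons, last_app_cons in W2. simpl in W2.
  split; [|split].
  - apply edge_loop_iff. split.
    + pose proof W1 as W1'. apply walk_snoc in W1'. exact (proj2 (adj_vx _ _ _ _ (proj2 W1'))).
    + replace ((b ++ x :: a) ++ [v]) with ((b ++ [x]) ++ (a ++ [v])) by (rewrite <- !app_assoc; reflexivity).
      apply walk_app. split; auto. rewrite app_comm_cons, last_app_cons. simpl. exact W1.
  - intros u w Hu' Hw' Cu Cw. apply Hu; auto.
    + simpl in Hu' |- *. rewrite in_app_iff in Hu' |- *. simpl in Hu' |- *. tauto.
    + simpl in Hw' |- *. rewrite in_app_iff in Hw' |- *. simpl in Hw' |- *. tauto.
  - simpl in Hl |- *. rewrite length_app in Hl |- *. simpl in Hl |- *. lia.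
Qed.

Lemma cellw n : forall x r, length r < n -> cell_loop Ps Sg l (x :: r) -> FE' (wd (x :: r ++ [x])) [].
Proof.
  induction n as [|n IHn]; intros x r Hn Hc. lia.
  assert (CH : forall i A r', length r' < Datatypes.S n -> cell_loop Ps Sg l (VC G i A :: r') ->
             FE' (wd (VC G i A :: r' ++ [VC G i A])) []).
  { intros i A r' Hr' Hc'. set (v := VC G i A) in *.
    destruct Hc' as [He [Hu Hl]]. pose proof He as He'. apply edge_loop_iff in He'. destruct He' as [Hv Hw].
    destruct (classic (In v r')) as [Hin|Hnin].
    - apply in_split in Hin. destruct Hin as [r1 [r2 ->]].
      replace (v :: (r1 ++ v :: r2) ++ [v]) with ((v :: r1) ++ v :: (r2 ++ [v]))
        by (simpl; rewrite <- !app_assoc; reflexivity).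
      rewrite wd_app. simpl app.
      replace ((r1 ++ v :: r2) ++ [v]) with ((r1 ++ [v]) ++ (r2 ++ [v])) in Hw
        by (rewrite <- !app_assoc; reflexivity).
      apply walk_app in Hw. destruct Hw as [W1 W2]. rewrite app_comm_cons, last_app_cons in W2. simpl in W2.
      simpl in Hl. rewrite length_app in Hr', Hl. simpl in Hr', Hl.
      change (FE' (wd (v :: r1 ++ [v]) ++ wd (v :: r2 ++ [v])) ([] ++ [])).
      apply fe_app. apply IHn. lia. split; [|split].
      + apply edge_loop_iff. auto.
      + refine (unicone_sub _ Hu). intros w Hw1. simpl in Hw1 |- *. rewrite in_app_iff. tauto.
      + simpl. lia.
      + apply IHn. lia. split; [|split].
        * apply edge_loop_iff. auto.
        * refine (unicone_sub _ Hu). intros w Hw1. simpl in Hw1 |- *. rewrite in_app_iff. simpl. tauto.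
        * simpl. lia.
    - assert (Hnc : Forall noncone r').
      { apply Forall_forall. intros w Hw1 Cw. apply Hnin. rewrite <- (Hu w v); simpl; auto. }
      destruct r' as [|g r''].
      { simpl in Hw. destruct Hw as [[] _]. }
      inversion Hnc as [|? ? Hg Hnc']; subst. destruct g as [g1|]. 2:{ destruct Hg; exact I. }
      destruct (split_last (VG G g1) r'') as [A0 HA0].
      assert (Hlast : Forall noncone (VG G g1 :: r'')) by (constructor; auto).
      remember (last (VG G g1 :: r'') (VG G g1)) as lv eqn:Hlv.
      assert (noncone lv).
      { rewrite Forall_forall in Hlast. apply Hlast. rewrite HA0. apply in_or_app. right. left. reflexivity. }
      destruct lv as [gk|]. 2:{ exfalso. apply H. exact I. }
      simpl in Hw. destruct Hw as [Hvg [_ Hw]]. apply walk_snoc in Hw. destruct Hw as [Hw Hlastadj].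
      rewrite <- Hlv in Hlastadj.
      destruct (vg_walk _ Hnc' Hw) as [K1 [K2 K3]]. specialize (K3 gk (eq_sym Hlv)).
      set (Wm := wd (VG G g1 :: r'')) in *.
      assert (E : wd (v :: (VG G g1 :: r'') ++ [v]) = edgew v (VG G g1) ++ Wm ++ edgew (VG G gk) v).
      { change (wd (v :: (VG G g1 :: r'') ++ [v])) with (edgew v (VG G g1) ++ wd ((VG G g1 :: r'') ++ [v])).
        f_equal. rewrite HA0. rewrite <- app_assoc. simpl. rewrite wd_app. rewrite <- HA0. reflexivity. }
      rewrite E. clear E.
      simpl in Hvg. destruct Hvg as [Hco Hg1]. simpl in Hlastadj. destruct Hlastadj as [_ Hgk].
      pose proof (coset_rep Hco) as Hcr. destruct Hco as [Hi Hco'].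
      simpl edgew.
      apply (fe_cyc _ sP). constructor; [|constructor]. simpl. split; auto.
      apply (coset_mem (conj Hi Hco')); auto.
      rewrite <- app_assoc. simpl.
      eapply fe_trans. apply fe_l. apply parmerge; auto.
      apply (coset_mem (conj Hi Hco')); auto. apply (coset_mem (conj Hi Hco')); auto.
      rewrite <- gA, gVK.
      replace (gmul (ginv gk) g1) with (ginv (phi Wm)) by (rewrite K3, ginvM, ginvK; reflexivity).
      apply fe_rel. apply R2; auto.
      + simpl in Hl. lia.
      + rewrite K3. apply (coset_mem (conj Hi Hco')); auto. }
  destruct (classic (exists v, In v (x :: r) /\ is_cone v)) as [[v [Hv Hcv]] | Hno].
  - destruct v as [|i A]. destruct Hcv.
    apply in_split in Hv. destruct Hv as [a1 [b1 Hab]].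
    destruct a1 as [|x' a1].
    + simpl in Hab. injection Hab as -> ->. apply CH; auto.
    + injection Hab as <- ->.
      pose proof (rotate_cell _ _ _ Hc) as Hc2.
      assert (E1 : wd (x :: (a1 ++ VC G i A :: b1) ++ [x]) = wd (x :: a1 ++ [VC G i A]) ++ wd (VC G i A :: b1 ++ [x])).
      { rewrite <- app_assoc. change ((VC G i A :: b1) ++ [x]) with (VC G i A :: (b1 ++ [x])).
        rewrite app_comm_cons, wd_app. reflexivity. }
      assert (E2 : wd (VC G i A :: (b1 ++ x :: a1) ++ [VC G i A]) = wd (VC G i A :: b1 ++ [x]) ++ wd (x :: a1 ++ [VC G i A])).
      { rewrite <- app_assoc. change ((x :: a1) ++ [VC G i A]) with (x :: (a1 ++ [VC G i A])).
        rewrite app_comm_cons, wd_app. reflexivity. }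
      rewrite E1. apply (fe_cyc _ sP).
      * destruct Hc2 as [He _]. apply edge_loop_iff in He. destruct He as [_ Hw].
        replace ((b1 ++ x :: a1) ++ [VC G i A]) with ((b1 ++ [x]) ++ (a1 ++ [VC G i A])) in Hw
          by (rewrite <- !app_assoc; reflexivity).
        apply walk_app in Hw. destruct Hw as [_ Hw]. rewrite app_comm_cons, last_app_cons in Hw. simpl in Hw.
        apply wd_valid. exact Hw.
      * rewrite <- E2. apply CH. simpl in Hn |- *. rewrite length_app in *. simpl in *. lia. exact Hc2.
  - assert (Hnc : Forall noncone (x :: r ++ [x])).
    { apply Forall_forall. intros w Hw Cw. apply Hno. exists w. split; auto.
      simpl in Hw |- *. rewrite in_app_iff in Hw. simpl in Hw. intuition congruence. }
    inversion Hnc as [|? ? Hx Hnc']; subst. destruct x as [a|]. 2:{ destruct Hx; exact I. }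
    destruct Hc as [He [_ Hl]]. apply edge_loop_iff in He. destruct He as [_ Hw].
    destruct (vg_walk _ Hnc' Hw) as [K1 [K2 K3]].
    apply fe_rel. apply R1; auto. rewrite K2, length_app. simpl in Hl |- *. lia.
    rewrite (K3 a). apply gVl. rewrite app_comm_cons, last_app_cons; reflexivity.
Qed.


Lemma htp_fe L1 L2 : htp_step Ps Sg l L1 L2 -> FE' (wd L1) (wd L2).
Proof.
  intro H. destruct H as [p q u v Hu Hv Ha|p q x r Hc].
  - rewrite (wd_app p u (v :: u :: q)), (wd_app p u q).
    assert (E: wd (u :: v :: u :: q) = (edgew u v ++ edgew v u) ++ wd (u :: q))
      by (simpl; rewrite app_assoc; reflexivity).
    rewrite E. exact (fe_ctx _ _ (back_fe _ _ Ha)).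
  - rewrite (wd_app p x (r ++ x :: q)), (wd_app p x q). rewrite app_comm_cons, (wd_app (x :: r) x q).
    exact (fe_ctx _ _ (cellw (Nat.lt_succ_diag_r (length r)) Hc)).
Qed.

Lemma ht_fe L1 L2 : homotopic Ps Sg l L1 L2 -> FE' (wd L1) (wd L2).
Proof.
  intro H. induction H. apply htp_fe; auto. apply rst_refl. apply fe_sym; auto. eapply fe_trans; eauto.
Qed.

Definition stepv (h v : G) : list (vertex G) := if dec (gmul h v = h) then [] else [VG G (gmul h v)].
Definition cosv (i : nat) (h : G) : vertex G := VC G i (fun z => Pi G Ps i (gmul (ginv h) z)).
Definition pth1 (h : G) (a : letter G) : list (vertex G) :=
  match a with
  | Gen _ s b => stepv h (eval_letter a)
  | Par _ i p => [cosv i h; VG G (gmul h p)]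
  end.
Fixpoint pth (h : G) (w : list (letter G)) : list (vertex G) :=
  match w with [] => [] | a :: w' => pth1 h a ++ pth (gmul h (eval_letter a)) w' end.

Lemma last_pth1 h a d : last (VG G h :: pth1 h a) d = VG G (gmul h (eval_letter a)).
Proof.
  destruct a as [s b|i p]; simpl.
  - unfold stepv. destruct (dec _) as [E|E]; simpl. rewrite E. reflexivity. reflexivity.
  - reflexivity.
Qed.

Lemma pre_split h a X : exists A, (VG G h :: pth1 h a = A ++ [VG G (gmul h (eval_letter a))]) /\
   (VG G h :: pth1 h a ++ X = A ++ VG G (gmul h (eval_letter a)) :: X).
Proof.
  destruct (split_last (VG G h) (pth1 h a)) as [A HA]. rewrite last_pth1 in HA.
  exists A. split; auto. rewrite app_comm_cons, HA, <- app_assoc. reflexivity.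
Qed.

Lemma cosv_adj i h : i < length Ps -> adj Ps Sg (VG G h) (cosv i h).
Proof.
  intro Hi. simpl. split. split; auto. exists h. tauto. rewrite gVl. apply (sub1 (Pi_sub sP Hi)).
Qed.

Lemma walk_pth1 h a : valid_letter Ps Sg a -> walk Ps Sg (VG G h) (pth1 h a).
Proof.
  intro Ha. destruct a as [s b|i p]; simpl in *.
  - unfold stepv. destruct (dec _) as [E|E]; simpl; auto. split; [|split; auto].
    split. intro E'. apply E. auto.
    destruct b; simpl. left. rewrite gKV. auto. right. rewrite ginvM, ginvK, <- gA, gVl, gmulg1. auto.
  - destruct Ha as [Hi Hp]. split. apply (cosv_adj h Hi). split. split; auto. exists h; tauto.
    split; [|split; auto]. split. split; auto. exists h; tauto. rewrite gKV. auto.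
Qed.

Lemma walk_pth h w : valid_word Ps Sg w -> walk Ps Sg (VG G h) (pth h w).
Proof.
  revert h. induction w as [|a w IH]; intros h Hw. simpl; auto.
  inversion Hw; subst. simpl. apply walk_app. split. apply walk_pth1; auto.
  rewrite last_pth1. apply IH; auto.
Qed.

Lemma last_pth h w d : last (VG G h :: pth h w) d = VG G (gmul h (phi w)).
Proof.
  revert h d. induction w as [|a w IH]; intros h d. simpl. rewrite gmulg1. reflexivity.
  change (pth h (a :: w)) with (pth1 h a ++ pth (gmul h (eval_letter a)) w).
  destruct (pre_split h a (pth (gmul h (eval_letter a)) w)) as [A [_ HA]].
  rewrite HA, last_app_cons, IH, phi_cons, gA. reflexivity.
Qed.

Lemma wd2 x y : wd [x; y] = edgew x y.
Proof. simpl. apply app_nil_r. Qed.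

Lemma fe_letter h a : valid_letter Ps Sg a -> FE' [a] (wd (VG G h :: pth1 h a)).
Proof.
  intro Ha. pose proof (walk_pth1 h a Ha) as Hw. destruct a as [s b|i p].
  - cbn [pth1] in Hw |- *. unfold stepv in *. destruct (dec _) as [E|E].
    + simpl. apply sw_eq. constructor; [|constructor]. exists s, b; split; auto. constructor.
      simpl; lia. unfold phi. simpl. rewrite gmulg1. rewrite <- (gmulg1 _ h) in E at 2.
      apply gcancel in E. exact E.
    + rewrite wd2. destruct Hw as [Hadj _]. destruct (edge_vg Hadj) as [E1 [E2 E3]].
      apply sw_eq. constructor; [|constructor]. exists s, b; split; auto. auto.
      rewrite E2. simpl; lia. rewrite E3, gKV. unfold phi. simpl. rewrite gmulg1. reflexivity.
  - simpl in Ha. destruct Ha as [Hi Hp]. simpl. apply fe_sym.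
    set (A := fun z => Pi G Ps i (gmul (ginv h) z)).
    assert (Hc : is_coset G Ps i A) by (split; auto; exists h; unfold A; tauto).
    pose proof (coset_rep Hc) as Hr.
    eapply fe_trans. apply parmerge; auto. apply (coset_mem Hc); auto. unfold A. rewrite gKV. auto.
    rewrite <- gA, gVK, gKV. apply rst_refl.
Qed.

Lemma fe_pth h w : valid_word Ps Sg w -> FE' w (wd (VG G h :: pth h w)).
Proof.
  revert h. induction w as [|a w IH]; intros h Hw. apply rst_refl.
  inversion Hw; subst. change (pth h (a :: w)) with (pth1 h a ++ pth (gmul h (eval_letter a)) w).
  destruct (pre_split h a (pth (gmul h (eval_letter a)) w)) as [A [HA1 HA2]].
  rewrite HA2, wd_app, <- HA1.
  change (a :: w) with ([a] ++ w). apply fe_app. apply fe_letter; auto. apply IH; auto.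
Qed.

Lemma back_main : simply_connected_l G Ps Sg l -> generates G Sg -> rel_fin_presented G Ps.
Proof.
  intros [_ [_ Hsc]] Hgen. exists Sg, Rset. destruct Rset_prop as [RV RP].
  split; [|split; [exact RV|split; [exact RP|]]].
  - intro g. destruct (Hgen g) as [w [Hw Hg]].
    exists (map (fun a => Gen G (fst a) (snd a)) w). split.
    + unfold valid_word. apply Forall_map. eapply Forall_impl; [|exact Hw]. simpl. auto.
    + rewrite <- Hg. unfold phi. rewrite map_map. reflexivity.
  - intros w Hw Hp.
    assert (K : homotopic Ps Sg l (VG G gone :: pth gone w) [VG G gone]).
    { apply Hsc. exact I. apply walk_pth; auto. rewrite last_pth, Hp, gmulg1. reflexivity. }
    apply ht_fe in K. simpl in K. eapply fe_trans. apply (fe_pth gone Hw). exact K.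
Qed.

End Back.

Ltac nrmH K := repeat (rewrite <- app_assoc in K); simpl in K; repeat (rewrite <- app_assoc in K); simpl in K;
  repeat (rewrite <- app_assoc in K).
Ltac nrmG := repeat (rewrite <- app_assoc); simpl; repeat (rewrite <- app_assoc); simpl; repeat (rewrite <- app_assoc).

Section Fwd.
Context (G : group) (Ps : list (G -> Prop)) (Sg : list G) (S' : list G) (R : list (list (letter G))).
Context (sP : Forall (subgroup G) Ps).
Context (Hgen : generates G Sg).
Context (Hsurj : forall g : G, exists w, valid_word Ps S' w /\ phi w = g).
Context (l : nat).

Definition sv (a : G * bool) : G := if snd a then fst a else ginv (fst a).

Definition tau (g : G) : list (G * bool) := proj1_sig (constructive_indefinite_description _ (Hgen g)).
Lemma tau_S g : Forall (fun a => In (fst a) Sg) (tau g).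
Proof. unfold tau. destruct (constructive_indefinite_description _ _) as [w [H1 H2]]. exact H1. Qed.
Lemma tau_val g : gprod G (map sv (tau g)) = g.
Proof. unfold tau. destruct (constructive_indefinite_description _ _) as [w [H1 H2]]. exact H2. Qed.

Definition sigma (g : G) : list (letter G) := proj1_sig (constructive_indefinite_description _ (Hsurj g)).
Lemma sigma_valid g : valid_word Ps S' (sigma g).
Proof. unfold sigma. destruct (constructive_indefinite_description _ _) as [w [H1 H2]]. exact H1. Qed.
Lemma sigma_val g : phi (sigma g) = g.
Proof. unfold sigma. destruct (constructive_indefinite_description _ _) as [w [H1 H2]]. exact H2. Qed.

Definition gstep (h v : G) : list (vertex G) := if dec (gmul h v = h) then [] else [VG G (gmul h v)].
Fixpoint PS (h : G) (w : list (G * bool)) : list (vertex G) :=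
  match w with [] => [] | a :: w' => gstep h (sv a) ++ PS (gmul h (sv a)) w' end.
Definition endS h w := gmul h (gprod G (map sv w)).

Definition cone (i : nat) (h : G) : vertex G := VC G i (fun z => Pi G Ps i (gmul (ginv h) z)).
Definition Pc1 (h : G) (a : letter G) : list (vertex G) :=
  match a with
  | Gen _ s b => PS h (tau (eval_letter a))
  | Par _ i p => [cone i h; VG G (gmul h p)]
  end.
Fixpoint Pc (h : G) (w : list (letter G)) : list (vertex G) :=
  match w with [] => [] | a :: w' => Pc1 h a ++ Pc (gmul h (eval_letter a)) w' end.

Definition SwF (w : list (letter G)) : list (G * bool) := flat_map (fun a => tau (eval_letter a)) w.

Notation HT := (homotopic Ps Sg l).

Lemma gstep_last h v d : last (VG G h :: gstep h v) d = VG G (gmul h v).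
Proof. unfold gstep. destruct (dec _) as [E|E]; simpl; [rewrite E|]; reflexivity. Qed.

Lemma split_gen (x : vertex G) X y : last (x :: X) x = y -> forall B, x :: X ++ B = removelast (x :: X) ++ y :: B.
Proof.
  intros Hy B. rewrite app_comm_cons. rewrite (@app_removelast_last _ (x :: X) x) at 1 by discriminate.
  rewrite Hy, <- app_assoc. reflexivity.
Qed.

Lemma last_PS h w d : last (VG G h :: PS h w) d = VG G (endS h w).
Proof.
  revert h d. induction w as [|a w IH]; intros h d.
  - unfold endS. simpl. rewrite gmulg1. reflexivity.
  - change (PS h (a :: w)) with (gstep h (sv a) ++ PS (gmul h (sv a)) w).
    rewrite (split_gen _ _ (gstep_last h (sv a) (VG G h))). rewrite last_app_cons, IH.
    unfold endS. simpl. rewrite gA. reflexivity.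
Qed.

Lemma PS_app h u v : PS h (u ++ v) = PS h u ++ PS (endS h u) v.
Proof.
  revert h. induction u as [|a u IH]; intro h; unfold endS in *; simpl.
  - rewrite gmulg1. reflexivity.
  - rewrite IH, app_assoc, gA. reflexivity.
Qed.

Lemma PS_prop h w : Forall (fun a => In (fst a) Sg) w ->
  walk Ps Sg (VG G h) (PS h w) /\ Forall (fun v => ~ is_cone v) (PS h w) /\ length (PS h w) <= length w.
Proof.
  revert h. induction w as [|a w IH]; intros h Hw. simpl. split; auto.
  inversion Hw as [|? ? Ha Hw']; subst. destruct (IH (gmul h (sv a)) Hw') as [W1 [W2 W3]].
  simpl. rewrite length_app. unfold gstep. destruct (dec _) as [E|E]; simpl.
  - split; [|split; [auto|lia]]. replace (VG G h) with (VG G (gmul h (sv a))) by (rewrite E; reflexivity). exact W1.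
  - split; [|split]. split; [|split; auto].
    + split. intro E'. apply E. auto. unfold sv. destruct a as [s b]; destruct b; simpl in *.
      left. rewrite gKV. auto. right. rewrite ginvM, ginvK, <- gA, gVl, gmulg1. auto.
    + constructor; auto.
    + lia.
Qed.

Lemma last_Pc1 h a d : last (VG G h :: Pc1 h a) d = VG G (gmul h (eval_letter a)).
Proof.
  destruct a as [s b|i p].
  - change (Pc1 h (Gen G s b)) with (PS h (tau (eval_letter (Gen G s b)))).
    rewrite last_PS. unfold endS. rewrite tau_val. reflexivity.
  - reflexivity.
Qed.

Lemma Pc_app h u v : Pc h (u ++ v) = Pc h u ++ Pc (gmul h (phi u)) v.
Proof.
  revert h. induction u as [|a u IH]; intro h; simpl.
  - unfold phi. simpl. rewrite gmulg1. reflexivity.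
  - rewrite IH, app_assoc, phi_cons, gA. reflexivity.
Qed.

Lemma last_Pc h w d : last (VG G h :: Pc h w) d = VG G (gmul h (phi w)).
Proof.
  revert h d. induction w as [|a w IH]; intros h d.
  - simpl. unfold phi; simpl. rewrite gmulg1. reflexivity.
  - change (Pc h (a :: w)) with (Pc1 h a ++ Pc (gmul h (eval_letter a)) w).
    rewrite (split_gen _ _ (last_Pc1 h a (VG G h))). rewrite last_app_cons, IH, phi_cons, gA. reflexivity.
Qed.

Lemma gprod_Sw w : gprod G (map sv (SwF w)) = phi w.
Proof.
  induction w as [|a w IH]. reflexivity. simpl. rewrite map_app, gprod_app, IH, tau_val. reflexivity.
Qed.

Lemma Sw_S w : Forall (fun a => In (fst a) Sg) (SwF w).
Proof. induction w as [|a w IH]. constructor. simpl. apply Forall_app. split; auto. apply tau_S. Qed.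

Lemma cone_adj i h : i < length Ps -> adj Ps Sg (VG G h) (cone i h).
Proof.
  intro Hi. simpl. split. split; auto. exists h. tauto. rewrite gVl. apply (sub1 (Pi_sub sP Hi)).
Qed.
Lemma cone_adj2 i h p : i < length Ps -> Pi G Ps i p -> adj Ps Sg (cone i h) (VG G (gmul h p)).
Proof. intros Hi Hp. simpl. split. split; auto. exists h. tauto. rewrite gKV. auto. Qed.

Lemma cone_eq i A a : is_coset G Ps i A -> A a -> VC G i A = cone i a.
Proof.
  intros Hc Ha. pose proof (coset_sub sP Hc) as sH. destruct Hc as [Hi [g Hg]]. unfold cone. f_equal.
  apply functional_extensionality. intro z. apply propositional_extensionality.
  rewrite Hg. apply Hg in Ha. split; intro H.
  - apply (sub_coset g sH); auto.
  - pose proof (subM sH Ha H) as K. rewrite <- gA, gVK in K. exact K.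
Qed.

Lemma cone_shift i h x : i < length Ps -> Pi G Ps i x -> cone i (gmul h x) = cone i h.
Proof.
  intros Hi Hx. symmetry. apply cone_eq. split; auto. exists h. tauto. rewrite gKV. auto.
Qed.

Lemma cwd x Q A B : is_vertex Ps x -> walk Ps Sg x Q -> last (x :: Q) x = x -> unicone (x :: Q) ->
  length Q < l -> HT (A ++ x :: Q ++ B) (A ++ x :: B).
Proof.
  intros Hx Hw Hl Hu Hlen. destruct Q as [|y Q]. apply rst_refl.
  assert (E : y :: Q = removelast (y :: Q) ++ [x]).
  { rewrite (@app_removelast_last _ (y :: Q) x) at 1 by discriminate. f_equal. f_equal.
    rewrite <- Hl. simpl. apply last_indep. }
  set (Q' := removelast (y :: Q)) in *. rewrite E in Hw, Hu, Hlen |- *.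
  rewrite <- app_assoc. simpl. apply rst_step. apply hs_cell. split; [|split].
  - apply edge_loop_iff. auto.
  - refine (unicone_sub _ Hu). intros w Hw'. simpl in Hw' |- *. rewrite in_app_iff. tauto.
  - simpl. rewrite length_app in Hlen. simpl in Hlen. lia.
Qed.

Lemma noncone_unicone (x : vertex G) (Q : list (vertex G)) : Forall (fun v => ~ is_cone v) Q -> unicone (x :: Q).
Proof.
  intros HQ u w Hu Hw Cu Cw. rewrite Forall_forall in HQ. destruct Hu as [<-|Hu].
  - destruct Hw as [<-|Hw]. auto. exfalso. exact (HQ w Hw Cw).
  - exfalso. exact (HQ u Hu Cu).
Qed.

Lemma par_replace i p h A B : i < length Ps -> Pi G Ps i p -> length (tau p) + 2 < l ->
  HT (A ++ VG G h :: [cone i h; VG G (gmul h p)] ++ B) (A ++ VG G h :: PS h (tau p) ++ B).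
Proof.
  intros Hi Hp Hl. destruct (PS_prop h (tau_S p)) as [W1 [W2 W3]].
  pose proof (last_PS h (tau p) (VG G h)) as HL. unfold endS in HL. rewrite tau_val in HL.
  set (Q := PS h (tau p)) in *. simpl.
  destruct Q as [|y Q0] eqn:EQ.
  - simpl in HL. injection HL as HL. rewrite <- HL.
    apply rst_step. apply (@hs_back G Ps Sg l A B (VG G h) (cone i h)). exact I. split; auto. exists h; tauto.
    apply cone_adj; auto.
  - assert (E : y :: Q0 = removelast (y :: Q0) ++ [VG G (gmul h p)]).
    { rewrite (@app_removelast_last _ (y :: Q0) y) at 1 by discriminate. f_equal. f_equal.
      rewrite <- HL. simpl. apply last_indep. }
    set (Q' := removelast (y :: Q0)) in *. rewrite E in W1, W2, W3 |- *. clear E.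
    set (C := cone i h). set (hp := VG G (gmul h p)).
    assert (HC : cell_loop Ps Sg l (VG G h :: Q' ++ [hp; C])).
    { split; [|split].
      - apply edge_loop_iff. split. exact I.
        replace ((Q' ++ [hp; C]) ++ [VG G h]) with ((Q' ++ [hp]) ++ [C; VG G h]) by (rewrite <- !app_assoc; reflexivity).
        apply walk_app. split; auto. rewrite app_comm_cons, last_app_cons.
        pose proof (adj_sym _ _ _ _ (@cone_adj2 i h p Hi Hp)) as a1.
        pose proof (adj_sym _ _ _ _ (@cone_adj i h Hi)) as a2.
        pose proof (adj_vx _ _ _ _ a2) as [vC _].
        exact (conj a1 (conj vC (conj a2 (conj I I)))).
      - intros u w Hu Hw Cu Cw. rewrite Forall_forall in W2.
        assert (forall v, In v (VG G h :: Q' ++ [hp; C]) -> is_cone v -> v = C).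
        { intros v Hv Cv. simpl in Hv. rewrite in_app_iff in Hv. simpl in Hv.
          destruct Hv as [<-|[Hv|[<-|[<-|[]]]]]; try (destruct Cv; fail); auto.
          exfalso. apply (W2 v); auto. apply in_or_app; auto. }
        rewrite (H u), (H w); auto.
      - simpl. rewrite length_app in *. simpl in *. lia. }
    pose proof (@hs_cell G Ps Sg l A (C :: hp :: B) (VG G h) (Q' ++ [hp; C]) HC) as K1.
    assert (vC : is_vertex Ps C) by (split; auto; exists h; tauto).
    pose proof (@hs_back G Ps Sg l (A ++ VG G h :: Q' ++ [hp]) (hp :: B) C (VG G h) vC I
                  (adj_sym _ _ _ _ (@cone_adj i h Hi))) as K2.
    pose proof (@hs_back G Ps Sg l (A ++ VG G h :: Q') B hp C I vC (adj_sym _ _ _ _ (@cone_adj2 i h p Hi Hp))) as K3.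
    nrmH K1. nrmH K2. nrmH K3. nrmG.
    eapply rst_trans. apply rst_sym, rst_step. exact K1.
    eapply rst_trans. apply rst_step. exact K2.
    apply rst_step. exact K3.
Qed.


Definition Bw (w : list (letter G)) : nat := fold_right (fun a n => length (tau (eval_letter a)) + 2 + n) 0 w.

Lemma len_SwF w : length (SwF w) <= Bw w.
Proof. induction w as [|a w IH]; simpl. lia. rewrite length_app. lia. Qed.

Lemma end_tau h g : endS h (tau g) = gmul h g.
Proof. unfold endS. rewrite tau_val. reflexivity. Qed.

Lemma replace_word w : forall h A B, valid_word Ps S' w -> Bw w < l ->
  HT (A ++ VG G h :: Pc h w ++ B) (A ++ VG G h :: PS h (SwF w) ++ B).
Proof.
  induction w as [|a w IH]; intros h A B Hv Hb. apply rst_refl.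
  inversion Hv as [|? ? Ha Hv']; subst. simpl in Hb.
  change (Pc h (a :: w)) with (Pc1 h a ++ Pc (gmul h (eval_letter a)) w).
  change (SwF (a :: w)) with (tau (eval_letter a) ++ SwF w).
  rewrite PS_app, end_tau, <- !app_assoc.
  assert (Step : HT (A ++ VG G h :: Pc1 h a ++ Pc (gmul h (eval_letter a)) w ++ B)
                    (A ++ VG G h :: PS h (tau (eval_letter a)) ++ Pc (gmul h (eval_letter a)) w ++ B)).
  { destruct a as [s b|i p].
    - apply rst_refl.
    - destruct Ha as [Hi Hp]. exact (@par_replace i p h A (Pc (gmul h p) w ++ B) Hi Hp ltac:(simpl in Hb; lia)). }
  eapply rst_trans. exact Step.
  pose proof (last_PS h (tau (eval_letter a)) (VG G h)) as HL. rewrite end_tau in HL.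
  rewrite (split_gen _ _ HL (Pc _ w ++ B)), (split_gen _ _ HL (PS _ (SwF w) ++ B)), !app_assoc.
  apply IH; auto. lia.
Qed.

Context (Bfree : forall s, In s S' -> length (tau s) + length (tau (ginv s)) < l).
Context (Brel : forall r, In r R -> Bw r < l).
Context (Bedge : forall d, In d (Sg ++ map ginv Sg) -> Datatypes.S (Bw (sigma d)) < l).
Context (B2 : 2 < l).
Context (RV : Forall (valid_word Ps S') R) (RP : Forall (fun r => phi r = gone) R).

Lemma step_core h p X Y q : phi X = phi Y ->
  (forall A B, HT (A ++ VG G (gmul h (phi p)) :: Pc (gmul h (phi p)) X ++ B)
                  (A ++ VG G (gmul h (phi p)) :: Pc (gmul h (phi p)) Y ++ B)) ->
  HT (VG G h :: Pc h (p ++ X ++ q)) (VG G h :: Pc h (p ++ Y ++ q)).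
Proof.
  intros Hp H. rewrite !Pc_app. rewrite <- Hp.
  pose proof (last_Pc h p (VG G h)) as HL.
  rewrite (split_gen _ _ HL). rewrite (split_gen _ _ HL). apply H.
Qed.

Lemma cone_cell i h x : i < length Ps -> Pi G Ps i x -> cell_loop Ps Sg l [cone i h; VG G (gmul h x)].
Proof.
  intros Hi Hx. split; [|split].
  - apply (edge_loop_iff _ _ (cone i h) [VG G (gmul h x)]). split.
    + apply (adj_vx _ _ _ _ (@cone_adj i h Hi)).
    + simpl app. pose proof (@cone_adj2 i h x Hi Hx) as a1.
      exact (conj a1 (conj I (conj (adj_sym _ _ _ _ a1) (conj (proj2 (adj_vx _ _ _ _ (@cone_adj i h Hi))) I)))).
  - intros u w Hu Hw Cu Cw. simpl in Hu, Hw.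
    destruct Hu as [<-|[<-|[]]]; destruct Hw as [<-|[<-|[]]]; auto; simpl in Cu, Cw; contradiction.
  - simpl. lia.
Qed.

Lemma fp_sim u v h : fp_step Ps S' R u v -> HT (VG G h :: Pc h u) (VG G h :: Pc h v).
Proof.
  intro H. destruct H as [p q s b Hs|p q i x y Hi Hx Hy|p q i Hi|p q r Hr].
  - change (p ++ Gen G s b :: Gen G s (negb b) :: q) with (p ++ [Gen G s b; Gen G s (negb b)] ++ q).
    change (p ++ q) with (p ++ [] ++ q).
    apply step_core.
    { unfold phi. simpl. destruct b; simpl; rewrite gmulg1; [apply gmulgV|apply gVl]. }
    intros A B. set (h1 := gmul h (phi p)). simpl.
    set (v1 := if b then s else ginv s). set (v2 := if negb b then s else ginv s).
    rewrite app_nil_r.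
    change (PS h1 (tau v1) ++ PS (gmul h1 v1) (tau v2)) with (PS h1 (tau v1) ++ PS (gmul h1 v1) (tau v2)).
    rewrite <- end_tau, <- PS_app.
    assert (Hsw : Forall (fun a => In (fst a) Sg) (tau v1 ++ tau v2)) by (apply Forall_app; split; apply tau_S).
    destruct (PS_prop h1 Hsw) as [W1 [W2 W3]].
    apply cwd; auto. exact I.
    + rewrite last_PS. unfold endS. rewrite map_app, gprod_app, !tau_val.
      unfold v1, v2. destruct b; simpl; [rewrite gmulgV|rewrite gVl]; rewrite gmulg1; reflexivity.
    + apply noncone_unicone; auto.
    + rewrite length_app in W3.
      assert (length (tau v1) + length (tau v2) < l) by (unfold v1, v2; destruct b; simpl; pose proof (Bfree _ Hs); lia).
      lia.
  - change (p ++ Par G i x :: Par G i y :: q) with (p ++ [Par G i x; Par G i y] ++ q).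
    change (p ++ Par G i (gmul x y) :: q) with (p ++ [Par G i (gmul x y)] ++ q).
    apply step_core.
    { unfold phi. simpl. rewrite !gmulg1. reflexivity. }
    intros A B. set (h1 := gmul h (phi p)). simpl.
    rewrite (@cone_shift i h1 x Hi Hx), <- gA.
    pose proof (@hs_cell G Ps Sg l (A ++ [VG G h1]) (VG G (gmul h1 (gmul x y)) :: B) (cone i h1)
                  [VG G (gmul h1 x)] (@cone_cell i h1 x Hi Hx)) as K.
    nrmH K. apply rst_step. exact K.
  - change (p ++ Par G i gone :: q) with (p ++ [Par G i gone] ++ q).
    change (p ++ q) with (p ++ [] ++ q).
    apply step_core.
    { unfold phi. simpl. rewrite gmulg1. reflexivity. }
    intros A B. set (h1 := gmul h (phi p)). simpl. rewrite gmulg1.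
    apply rst_step. apply (@hs_back G Ps Sg l A B (VG G h1) (cone i h1)). exact I.
    apply (adj_vx _ _ _ _ (@cone_adj i h1 Hi)). apply cone_adj; auto.
  - change (p ++ q) with (p ++ [] ++ q).
    rewrite Forall_forall in RV, RP.
    apply step_core.
    { rewrite (RP r Hr). reflexivity. }
    intros A B. set (h1 := gmul h (phi p)). apply rst_sym.
    eapply rst_trans. apply replace_word. apply RV; auto. apply Brel; auto.
    destruct (PS_prop h1 (Sw_S r)) as [W1 [W2 W3]].
    apply cwd; auto. exact I.
    + rewrite last_PS. unfold endS. rewrite gprod_Sw, (RP r Hr), gmulg1. reflexivity.
    + apply noncone_unicone; auto.
    + pose proof (len_SwF r). pose proof (Brel _ Hr). lia.
Qed.

Lemma fe_ht u v h : clos_refl_sym_trans _ (fp_step Ps S' R) u v -> HT (VG G h :: Pc h u) (VG G h :: Pc h v).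
Proof.
  intro H. induction H. apply fp_sim; auto. apply rst_refl. apply rst_sym; auto. eapply rst_trans; eauto.
Qed.


Lemma edge_ht a b A B : adj Ps Sg (VG G a) (VG G b) -> Datatypes.S (Bw (sigma (gmul (ginv a) b))) < l ->
  HT (A ++ VG G a :: VG G b :: B) (A ++ VG G a :: Pc a (sigma (gmul (ginv a) b)) ++ B).
Proof.
  intros Hab Hb. set (sg := sigma (gmul (ginv a) b)). assert (Hb' : Datatypes.S (Bw sg) < l) by exact Hb.
  eapply rst_trans. 2:{ apply rst_sym. apply replace_word. apply sigma_valid. unfold sg. lia. }
  destruct (PS_prop a (Sw_S sg)) as [W1 [W2 W3]].
  pose proof (last_PS a (SwF sg) (VG G a)) as HL. unfold endS in HL.
  rewrite gprod_Sw in HL. unfold sg in HL. rewrite sigma_val, gVK in HL. fold sg in HL.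
  pose proof (len_SwF sg) as L1.
  set (Q := PS a (SwF sg)) in *.
  destruct Q as [|y Q0] eqn:EQ.
  - simpl in HL. injection HL as HL. simpl in Hab. destruct Hab as [Hne _]. contradiction.
  - assert (E : y :: Q0 = removelast (y :: Q0) ++ [VG G b]).
    { rewrite (@app_removelast_last _ (y :: Q0) y) at 1 by discriminate. f_equal. f_equal.
      rewrite <- HL. simpl. apply last_indep. }
    set (Q' := removelast (y :: Q0)) in *. rewrite E in W1, W2, W3 |- *. clear E.
    assert (HC : cell_loop Ps Sg l (VG G a :: Q' ++ [VG G b])).
    { split; [|split].
      - apply edge_loop_iff. split. exact I. apply walk_app. split; auto.
        rewrite app_comm_cons, last_app_cons. exact (conj (adj_sym _ _ _ _ Hab) (conj I I)).
      - apply noncone_unicone; auto.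
      - simpl. rewrite length_app in *. simpl in *. lia. }
    pose proof (@hs_cell G Ps Sg l A (VG G b :: B) (VG G a) (Q' ++ [VG G b]) HC) as K1.
    pose proof (@hs_back G Ps Sg l (A ++ VG G a :: Q') B (VG G b) (VG G a) I I (adj_sym _ _ _ _ Hab)) as K2.
    nrmH K1. nrmH K2. nrmG.
    eapply rst_trans. apply rst_sym, rst_step. exact K1.
    apply rst_step. exact K2.
Qed.

Fixpoint trans (a : G) (L : list (vertex G)) : list (letter G) :=
  match L with
  | VG _ b :: L' => sigma (gmul (ginv a) b) ++ trans b L'
  | VC _ i A :: VG _ b :: L' => Par G i (gmul (ginv a) b) :: trans b L'
  | _ => []
  end.

Lemma edge_bound a b : adj Ps Sg (VG G a) (VG G b) -> Datatypes.S (Bw (sigma (gmul (ginv a) b))) < l.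
Proof.
  intros [_ H]. apply Bedge. apply in_or_app. destruct H as [H|H]. left; auto.
  right. apply in_map_iff. exists (gmul (ginv b) a). split; auto. rewrite ginvM, ginvK. reflexivity.
Qed.

Lemma trans_ht n : forall L a e A B, length L < n -> walk Ps Sg (VG G a) L ->
  last (VG G a :: L) (VG G a) = VG G e ->
  HT (A ++ VG G a :: L ++ B) (A ++ VG G a :: Pc a (trans a L) ++ B) /\
  valid_word Ps S' (trans a L) /\ gmul a (phi (trans a L)) = e.
Proof.
  induction n as [|n IH]; intros L a e A B Hn Hw Hl. simpl in Hn; lia.
  destruct L as [|v L].
  - simpl in Hl. injection Hl as ->. simpl. split. apply rst_refl. split. constructor.
    unfold phi; simpl. apply gmulg1.
  - destruct v as [b|i A0].
    + simpl in Hw. destruct Hw as [Hab [_ Hw]]. rewrite last_cons_cons in Hl. simpl in Hn.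
      destruct (IH L b e (A ++ removelast (VG G a :: Pc a (sigma (gmul (ginv a) b)))) B ltac:(lia) Hw Hl)
        as [K1 [K2 K3]].
      assert (HL : last (VG G a :: Pc a (sigma (gmul (ginv a) b))) (VG G a) = VG G b)
        by (rewrite last_Pc, sigma_val, gVK; reflexivity).
      change (trans a (VG G b :: L)) with (sigma (gmul (ginv a) b) ++ trans b L).
      split; [|split].
      * eapply rst_trans. apply (edge_ht A (L ++ B) Hab (edge_bound Hab)).
        rewrite Pc_app, sigma_val, gVK, <- app_assoc.
        rewrite (split_gen _ _ HL (L ++ B)), (split_gen _ _ HL (Pc b (trans b L) ++ B)), !app_assoc.
        exact K1.
      * apply Forall_app. split; auto. apply sigma_valid.
      * rewrite phi_app, gA, sigma_val, gVK. exact K3.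
    + destruct L as [|v L].
      { simpl in Hl. discriminate. }
      destruct v as [b|j A1]. 2:{ simpl in Hw. destruct Hw as [_ [_ [[] _]]]. }
      simpl in Hw. destruct Hw as [[Hc Ha] [_ [[_ Hb] [_ Hw]]]].
      rewrite !last_cons_cons in Hl. simpl in Hn.
      destruct (IH L b e (A ++ [VG G a; VC G i A0]) B ltac:(lia) Hw Hl) as [K1 [K2 K3]].
      change (trans a (VC G i A0 :: VG G b :: L)) with (Par G i (gmul (ginv a) b) :: trans b L).
      split; [|split].
      * change (Pc a (Par G i (gmul (ginv a) b) :: trans b L))
          with ([cone i a; VG G (gmul a (gmul (ginv a) b))] ++ Pc (gmul a (gmul (ginv a) b)) (trans b L)).
        rewrite gVK, <- (@cone_eq i A0 a Hc Ha). nrmG. nrmH K1. exact K1.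
      * constructor; auto. simpl. split. apply Hc. apply (coset_mem sP Hc); auto.
      * rewrite phi_cons, gA. simpl. rewrite gVK. exact K3.
Qed.

Context (Hker : forall w, valid_word Ps S' w -> phi w = gone -> clos_refl_sym_trans _ (fp_step Ps S' R) w []).

Lemma closed_vg g p : walk Ps Sg (VG G g) p -> last (VG G g :: p) (VG G g) = VG G g -> HT (VG G g :: p) [VG G g].
Proof.
  intros Hw Hl.
  destruct (@trans_ht (Datatypes.S (length p)) p g g [] [] ltac:(lia) Hw Hl) as [K1 [K2 K3]].
  simpl in K1. rewrite !app_nil_r in K1.
  eapply rst_trans. exact K1.
  assert (Hp : phi (trans g p) = gone).
  { apply (gcancel _ g). rewrite K3, gmulg1. reflexivity. }
  exact (fe_ht g (Hker K2 Hp)).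
Qed.

Lemma closed_any x p : is_vertex Ps x -> walk Ps Sg x p -> last (x :: p) x = x -> HT (x :: p) [x].
Proof.
  intros Hx Hw Hl. destruct x as [g|i A].
  - apply closed_vg; auto.
  - destruct p as [|y p']. apply rst_refl.
    destruct p' as [|z p''].
    { simpl in Hl. subst. simpl in Hw. destruct Hw as [[] _]. }
    assert (Ey : exists c, y = VG G c).
    { destruct y as [c|]. eauto. simpl in Hw. destruct Hw as [[] _]. }
    destruct Ey as [c ->].
    assert (E : VG G c :: z :: p'' = VG G c :: removelast (z :: p'') ++ [VC G i A]).
    { rewrite app_comm_cons. rewrite (@app_removelast_last _ (VG G c :: z :: p'') (VG G c)) at 1 by discriminate.
      f_equal. f_equal. rewrite last_cons_cons. rewrite !last_cons_cons in Hl. exact Hl. }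
    rewrite E in Hw |- *. clear E. set (p1 := removelast (z :: p'')) in *. set (x := VC G i A) in *.
    simpl in Hw. destruct Hw as [Hxc [_ Hw]].
    assert (Hw2 : walk Ps Sg (VG G c) (p1 ++ [x; VG G c])).
    { replace (p1 ++ [x; VG G c]) with ((p1 ++ [x]) ++ [VG G c]) by (rewrite <- app_assoc; reflexivity).
      apply walk_snoc. split; auto. rewrite app_comm_cons, last_app_cons. simpl. exact Hxc. }
    assert (Hl2 : last (VG G c :: p1 ++ [x; VG G c]) (VG G c) = VG G c).
    { rewrite app_comm_cons, last_app_cons. reflexivity. }
    pose proof (ht_ctx [x] [x] (closed_vg _ Hw2 Hl2)) as K. simpl in K.
    pose proof (@hs_back G Ps Sg l (x :: VG G c :: p1) [] x (VG G c) Hx I Hxc) as K0.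
    pose proof (@hs_back G Ps Sg l [] [] x (VG G c) Hx I Hxc) as K3.
    nrmH K0. nrmH K. simpl in K3.
    eapply rst_trans. apply rst_sym, rst_step. exact K0.
    eapply rst_trans. exact K.
    apply rst_step. exact K3.
Qed.

Lemma anchor v : is_vertex Ps v -> exists g p1 p2, walk Ps Sg v p1 /\ last (v :: p1) v = VG G g /\
   walk Ps Sg (VG G g) p2 /\ last (VG G g :: p2) (VG G g) = v.
Proof.
  intro Hv. destruct v as [a|i A].
  - exists a, [], []. simpl. auto.
  - pose proof Hv as Hc. destruct Hv as [Hi [g Hg]].
    assert (Ag : A g) by (apply Hg; rewrite gVl; apply (sub1 (Pi_sub sP Hi))).
    exists g, [VG G g], [VC G i A].
    exact (conj (conj (conj Hc Ag) (conj I I)) (conj eq_refl (conj (conj (conj Hc Ag) (conj Hc I)) eq_refl))).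
Qed.

Lemma last_gen (x : vertex G) X Y y : last (x :: X) x = y -> last (x :: X ++ Y) x = last (y :: Y) y.
Proof. intro H. rewrite (split_gen _ _ H). apply last_app_cons. Qed.

Lemma sc : simply_connected_l G Ps Sg l.
Proof.
  split; [|split].
  - exists (VG G gone). exact I.
  - intros v w Hv Hw. destruct (anchor _ Hv) as [g1 [p1 [_ [W1 [L1 _]]]]].
    destruct (anchor _ Hw) as [g2 [_ [p2 [_ [_ [W2 L2]]]]]].
    set (Q := PS g1 (tau (gmul (ginv g1) g2))).
    destruct (PS_prop g1 (tau_S (gmul (ginv g1) g2))) as [W3 _]. fold Q in W3.
    assert (L3 : last (VG G g1 :: Q) (VG G g1) = VG G g2) by (unfold Q; rewrite last_PS, end_tau, gVK; reflexivity).
    exists (p1 ++ Q ++ p2). split.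
    + apply walk_app. split; auto. rewrite L1. apply walk_app. split; auto. rewrite L3. auto.
    + rewrite (@last_gen _ _ _ _ L1), (@last_gen _ _ _ _ L3). exact L2.
  - intros x p Hx Hw Hl. apply closed_any; auto.
Qed.

End Fwd.

Lemma sum_in {A : Type} (f : A -> nat) xs x : In x xs -> f x <= list_sum (map f xs).
Proof.
  induction xs as [|y xs IH]; simpl. tauto. intros [->|H]. lia. specialize (IH H). lia.
Qed.

Theorem proposition4p11 (G : group) (Ps : list (G -> Prop)) (S : list G) :
  group_pair G Ps -> generates G S ->
  (rel_fin_presented G Ps <-> coarsely_unicone_simply_connected G Ps S).
Proof.
  intros [_ [_ sP]] Hgen. split.
  - intros [S' [R [Hsurj [RV [RP Hker]]]]].
    set (f1 := fun s => length (tau Hgen s) + length (tau Hgen (ginv s))).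
    set (f2 := fun r => Bw Hgen r).
    set (f3 := fun d => Datatypes.S (Bw Hgen (sigma Hsurj d))).
    exists (3 + list_sum (map f1 S') + list_sum (map f2 R) + list_sum (map f3 (S ++ map ginv S))).
    apply (@sc G Ps S S' R sP Hgen Hsurj); auto.
    + intros s Hs. pose proof (sum_in f1 _ _ Hs). unfold f1 in *. lia.
    + intros r Hr. pose proof (sum_in f2 _ _ Hr). unfold f2 in *. lia.
    + intros d Hd. pose proof (sum_in f3 _ _ Hd). unfold f3 in *. lia.
    + lia.
  - intros [l Hl]. exact (back_main sP Hl Hgen).
Qed.
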